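(* Let $R=R_1\times\cdots\times R_t$, where each $R_i$ is a finite local Frobenius ring with residue field $R_i/\mathrm{rad}(R_i)$ of order $q$ (the same $q$ for all $i$). Then the normalized homogeneous weight on $R$ is $$\omega(a)=\begin{cases}1-\left(\dfrac{-1}{q-1}\right)^{\mathrm{wt}(a)}, & a\in\mathrm{soc}(R),\\[1ex] 1,& a\notin\mathrm{soc}(R),\end{cases}$$ where $\mathrm{wt}(a)=|\{i: a_i\neq0\}|$ is the Hamming weight of $a=(a_1,\dots,a_t)$.
   Context: A finite ring is Frobenius if it admits a generating character (a character $\chi$ of $(R,+)$ such that $r\mapsto(x\mapsto\chi(xr))$ is a bijection $R\to\widehat R$). A local ring has $\mathrm{rad}(R)$ (Jacobson radical) as unique maximal left ideal. $\mathrm{soc}(R)$ is the socle; for a product, $\mathrm{soc}(R_1\times\cdots\times R_t)=\mathrm{soc}(R_1)\times\cdots\times\mathrm{soc}(R_t)$. The normalized homogeneous weight on a finite Frobenius ring $S$ is the unique $\omega:S\to\mathbb Q$ with $\omega(0)=0$, $\omega(x)=\omega(y)$ whenever $Sx=Sy$, and $\sum_{y\in Sx}\omega(y)=|Sx|$ for all $x\ne0$. *)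

(* Defs.v *)
From HB Require Import structures.
From mathcomp Require Import all_boot all_order all_algebra all_field.
Set Implicit Arguments. Unset Strict Implicit. Unset Printing Implicit Defensive.
Import Order.TTheory GRing.Theory Num.Theory.
Local Open Scope ring_scope.

Section RingNotions.
Variable R : finNzRingType.

Definition left_ideal (I : {set R}) : bool :=
  [&& 0 \in I,
      [forall x, forall y, (x \in I) ==> (y \in I) ==> (x + y \in I)] &
      [forall r, forall x, (x \in I) ==> (r * x \in I)]].

Definition proper_left_ideal (I : {set R}) : bool :=
  left_ideal I && (I != [set: R]).

Definition maximal_left_ideal (I : {set R}) : bool :=
  proper_left_ideal I &&
  [forall J : {set R}, (proper_left_ideal J && (I \subset J)) ==> (J == I)].

(* local: a unique maximal left ideal M (then M = rad R) *)
Definition local_with_max (M : {set R}) : Prop :=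
  maximal_left_ideal M /\ forall J, maximal_left_ideal J -> J = M.

Definition minimal_left_ideal (I : {set R}) : bool :=
  [&& left_ideal I, I != [set 0] &
      [forall J : {set R}, (left_ideal J && (J \subset I)) ==> (J == [set 0]) || (J == I)]].

(* (left) socle: the sum of the minimal left ideals, i.e. the smallest left
   ideal containing all of them *)
Definition socle : {set R} :=
  \bigcap_(I : {set R} | left_ideal I &&
      [forall J : {set R}, minimal_left_ideal J ==> (J \subset I)]) I.

Definition is_character (chi : R -> algC) : Prop :=
  chi 0 = 1 /\ forall x y, chi (x + y) = chi x * chi y.

(* generating character: r |-> (x |-> chi (x r)) is a bijection R -> R^ *)
Definition generating_character (chi : R -> algC) : Prop :=
  is_character chi /\
  (forall r s : R, (forall x, chi (x * r) = chi (x * s)) -> r = s) /\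
  (forall psi, is_character psi -> exists r : R, forall x, psi x = chi (x * r)).

Definition frobenius : Prop := exists chi, generating_character chi.

End RingNotions.

Section Product.
Variables (t : nat) (R_ : 'I_t -> finNzRingType).

Definition prodR := {dffun forall i : 'I_t, R_ i}.

Definition pzero : prodR := @finfun _ (fun i => R_ i) (fun i => 0).

Definition pmul (r x : prodR) : prodR := @finfun _ (fun i => R_ i) (fun i => r i * x i).

Definition lideal_gen (x : prodR) : {set prodR} := [set pmul r x | r : prodR].

(* soc(R_1 x ... x R_t) = soc(R_1) x ... x soc(R_t) *)
Definition psocle : {set prodR} := [set a : prodR | [forall i, a i \in socle (R_ i)]].

Definition hwt (a : prodR) : nat := #|[set i : 'I_t | a i != 0]|.

Definition normalized_homogeneous_weight (w : prodR -> rat) : Prop :=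
  [/\ w pzero = 0,
      (forall x y, lideal_gen x = lideal_gen y -> w x = w y) &
      (forall x, x != pzero -> \sum_(y in lideal_gen x) w y = (#|lideal_gen x|)%:R)].

End Product.

(* Main.v *)
Require Import Defs.
From HB Require Import structures.
From mathcomp Require Import all_boot all_order all_algebra all_field.
From mathcomp Require Import zify.
Import Order.TTheory GRing.Theory Num.Theory.
Local Open Scope ring_scope.
Set Implicit Arguments. Unset Strict Implicit. Unset Printing Implicit Defensive.

Section LocalRing.
Variable R : finNzRingType.
Implicit Types (I J K : {set R}) (x y r : R).

Lemma liP I : left_ideal I -> [/\ 0 \in I, forall x y, x \in I -> y \in I -> x + y \in I
  & forall r x, x \in I -> r * x \in I].
Proof.
case/and3P => H0 /forallP Ha /forallP Hm; split => //.
- by move=> x y hx hy; have := forallP (Ha x) y; rewrite hx hy.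
- by move=> r x hx; have := forallP (Hm r) x; rewrite hx.
Qed.

Lemma mk_li I : 0 \in I -> (forall x y, x \in I -> y \in I -> x + y \in I) ->
  (forall r x, x \in I -> r * x \in I) -> left_ideal I.
Proof.
move=> H0 Ha Hm; apply/and3P; split=> //; apply/forallP=> x; apply/forallP=> y;
  apply/implyP=> hx; [apply/implyP=> hy; exact: Ha | exact: Hm].
Qed.

Lemma li_sub I x y : left_ideal I -> x \in I -> y \in I -> x - y \in I.
Proof. by case/liP=> _ Ha Hm hx hy; apply: Ha => //; rewrite -mulN1r; apply: Hm. Qed.

Lemma setT_li : left_ideal [set: R].
Proof. by apply: mk_li => *; rewrite inE. Qed.

Definition ann y := [set r | r * y == 0].
Definition gen x := [set r * x | r : R].

Lemma ann_li y : left_ideal (ann y).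
Proof.
apply: mk_li; rewrite ?inE ?mul0r //.
  by move=> a b; rewrite !inE mulrDl => /eqP-> /eqP->; rewrite addr0.
by move=> r a; rewrite !inE -mulrA => /eqP->; rewrite mulr0.
Qed.

Lemma mem_gen x r : r * x \in gen x.
Proof. exact: imset_f. Qed.

Lemma genP x z : reflect (exists r, z = r * x) (z \in gen x).
Proof. by apply: (iffP imsetP) => [[r _ ->]|[r ->]]; exists r. Qed.

Lemma gen_li x : left_ideal (gen x).
Proof.
apply: mk_li.
- by rewrite -(mul0r x) mem_gen.
- by move=> a b /genP[r ->] /genP[s ->]; rewrite -mulrDl mem_gen.
- by move=> a b /genP[r ->]; rewrite mulrA mem_gen.
Qed.

Lemma self_gen x : x \in gen x.
Proof. by rewrite -{1}(mul1r x) mem_gen. Qed.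

Lemma gen_sub I x : left_ideal I -> x \in I -> gen x \subset I.
Proof. by case/liP=> _ _ Hm hx; apply/subsetP=> z /genP[r ->]; apply: Hm. Qed.

Lemma card_gen y : (#|[set: R]| <= #|gen y| * #|ann y|)%N.
Proof.
rewrite -sum1_card (partition_big (fun r => r * y) (mem (gen y))) /=; last first.
  by move=> r _; apply: mem_gen.
rewrite -sum_nat_const leq_sum // => z /genP[r0 ->].
rewrite (eq_bigl (mem [set r | r * y == r0 * y])); last by move=> r; rewrite !inE.
rewrite sum1_card -(card_imset _ (subIr r0)).
apply: subset_leq_card; apply/subsetP=> u /imsetP[r]; rewrite inE => /eqP hr ->.
by rewrite inE mulrBl hr subrr.
Qed.

Variable M : {set R}.
Hypothesis HM : local_with_max M.

Lemma ex_max I : proper_left_ideal I -> exists J, maximal_left_ideal J /\ I \subset J.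
Proof.
have [n] := ubnP (#|[set: R]| - #|I|)%N; elim: n I => // n IH I Hn pI.
case: (boolP (maximal_left_ideal I)) => [mI|]; first by exists I.
rewrite /maximal_left_ideal pI /= negb_forall => /existsP[J].
rewrite negb_imply => /andP[/andP[pJ sIJ] nJI].
have cIJ : (#|I| < #|J|)%N by apply: proper_card; rewrite properEneq eq_sym nJI.
have cJ : (#|J| <= #|[set: R]|)%N by apply: subset_leq_card; apply: subsetT.
have [|K [mK sJK]] := IH J _ pJ; first by lia.
by exists K; split => //; apply: subset_trans sJK.
Qed.

Lemma proper_subM I : proper_left_ideal I -> I \subset M.
Proof. by case/ex_max=> J [mJ sIJ]; rewrite -(proj2 HM J mJ). Qed.

Lemma M_li : left_ideal M.
Proof. by case: HM => /andP[/andP[]]. Qed.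

Lemma one_notin_M : 1 \notin M.
Proof.
apply/negP=> h; case: HM => /andP[/andP[_ /negP nT]] _ _; apply: nT.
apply/eqP/setP=> r; rewrite inE; have [_ _ Hm] := liP M_li.
by rewrite -(mulr1 r) Hm.
Qed.

Lemma ann_subM y : y != 0 -> ann y \subset M.
Proof.
move=> y0; apply: proper_subM; rewrite /proper_left_ideal ann_li /=.
apply/negP=> /eqP h; have : 1 \in ann y by rewrite h inE.
by rewrite inE mul1r (negPf y0).
Qed.

Lemma M0 : (0 < #|M|)%N.
Proof. by apply/card_gt0P; exists 0; case: (liP M_li). Qed.


Variable chi : R -> algC.
Hypothesis Hchi : generating_character chi.
Variable q : nat.
Hypothesis Hq : #|[set: R]| = (q * #|M|)%N.

Lemma chi0 : chi 0 = 1.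
Proof. by case: Hchi => [[]]. Qed.
Lemma chiD a b : chi (a + b) = chi a * chi b.
Proof. by case: Hchi => [[_ ->]]. Qed.

Lemma char_sum (G : {set R}) (psi : R -> algC) a :
  (forall u v, psi (u + v) = psi u * psi v) ->
  (forall u v, u \in G -> v \in G -> u + v \in G) ->
  (forall u v, u \in G -> v \in G -> u - v \in G) ->
  a \in G -> psi a != 1 -> \sum_(r in G) psi r = 0.
Proof.
move=> psiD Gadd Gsub aG pa.
have e : \sum_(r in G) psi r = psi a * \sum_(r in G) psi r.
  rewrite {1}(reindex (fun r => a + r)) /=; last first.
    by apply: onW_bij; exists (fun r => - a + r) => r; [apply: addKr | apply: addNKr].
  rewrite mulr_sumr; apply: eq_big => r; last by move=> _; rewrite psiD.
  apply/idP/idP => h; last exact: Gadd.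
  have -> : r = (a + r) - a by rewrite addrAC subrr add0r.
  exact: Gsub.
have : (1 - psi a) * \sum_(r in G) psi r = 0 by rewrite mulrBl mul1r -e subrr.
by move/eqP; rewrite mulf_eq0 subr_eq0 eq_sym (negPf pa) => /eqP.
Qed.

Lemma nontriv r : r != 0 -> exists x, chi (x * r) != 1.
Proof.
move=> r0; case: Hchi => _ [inj _].
case: (boolP [exists x, chi (x * r) != 1]) => [/existsP//|/existsPn H].
exfalso; move/eqP: r0; apply; apply: inj => x; rewrite mulr0 chi0.
by apply/eqP; move: (H x); rewrite negbK.
Qed.

Definition Ssoc := [set r | [forall m in M, m * r == 0]].

Lemma SsocP r : reflect (forall m, m \in M -> m * r = 0) (r \in Ssoc).
Proof.
rewrite inE; apply: (iffP forallP) => h m.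
  by move=> mM; move: (h m); rewrite mM /= => /eqP.
by apply/implyP => mM; apply/eqP; apply: h.
Qed.

Lemma Ssoc0 : 0 \in Ssoc.
Proof. by apply/SsocP => m _; rewrite mulr0. Qed.
Lemma Ssoc_add u v : u \in Ssoc -> v \in Ssoc -> u + v \in Ssoc.
Proof. by move=> /SsocP hu /SsocP hv; apply/SsocP => m mM; rewrite mulrDr hu ?hv ?addr0. Qed.
Lemma Ssoc_sub u v : u \in Ssoc -> v \in Ssoc -> u - v \in Ssoc.
Proof. by move=> /SsocP hu /SsocP hv; apply/SsocP => m mM; rewrite mulrBr hu ?hv ?subr0. Qed.

Lemma Ssoc_bound : (#|Ssoc| <= q)%N.
Proof.
pose f x := \sum_(r in Ssoc) chi (x * r).
have f_ge0 x : 0 <= f x.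
  case: (boolP [exists r in Ssoc, chi (x * r) != 1]) => [/existsP[a /andP[aS ha]]|/existsPn H].
    rewrite /f (char_sum (psi := fun r => chi (x * r)) _ Ssoc_add Ssoc_sub aS ha) //.
    by move=> u v; rewrite mulrDr chiD.
  rewrite /f (eq_bigr (fun _ => 1)); first by rewrite sumr_const ler0n.
  by move=> r rS; apply/eqP; move: (H r); rewrite rS /= negbK.
have fM x : x \in M -> f x = #|Ssoc|%:R.
  move=> xM; rewrite /f (eq_bigr (fun _ => 1)) ?sumr_const //.
  by move=> r /SsocP/(_ x xM) ->; exact: chi0.
have total : \sum_(x in [set: R]) f x = #|[set: R]|%:R.
  rewrite /f exchange_big /= (bigD1 0) ?Ssoc0 //= [X in _ + X]big1 ?addr0.
    by rewrite (eq_bigr (fun _ => 1)) ?sumr_const // => x _; rewrite mulr0 chi0.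
  move=> r /andP[rS r0]; have [x hx] := nontriv r0.
  apply: (char_sum (psi := fun x => chi (x * r)) _ _ _ (in_setT x) hx).
  - by move=> u v; rewrite mulrDl chiD.
  - by move=> *; rewrite inE.
  - by move=> *; rewrite inE.
have : (#|M| * #|Ssoc|)%:R <= (q * #|M|)%:R :> algC.
  rewrite -Hq -total (big_setID M) setTI /=.
  apply: ler_wpDr; first by apply: sumr_ge0 => x _.
  by rewrite (eq_bigr _ fM) sumr_const natrM mulr_natl.
by rewrite ler_nat mulnC leq_pmul2r // M0.
Qed.


Definition pminimal J := [/\ left_ideal J, J != [set 0] &
  forall K, left_ideal K -> K \subset J -> K != [set 0] -> K = J].

Lemma nonzero_elt J : left_ideal J -> J != [set 0] -> exists2 y, y \in J & y != 0.
Proof.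
move=> lJ nJ; case: (boolP [exists y in J, y != 0]) => [/existsP[y /andP[]]|/existsPn H].
  by exists y.
exfalso; move/eqP: nJ; apply; apply/setP => y; rewrite inE; apply/idP/eqP => [yJ|->].
  by move: (H y); rewrite yJ /= negbK => /eqP.
by case: (liP lJ).
Qed.

Lemma ex_min I : left_ideal I -> I != [set 0] -> exists J, pminimal J /\ J \subset I.
Proof.
have [n] := ubnP #|I|; elim: n I => // n IH I Hn lI nI.
case: (boolP [exists K, [&& left_ideal K, K \subset I, K != [set 0] & K != I]]) =>
  [/existsP[K /and4P[lK sKI nK nKI]] | /existsPn H].
  have cK : (#|K| < #|I|)%N by apply: proper_card; rewrite properEneq nKI sKI.
  have [|J [mJ sJK]] := IH K _ lK nK; first by lia.
  by exists J; split => //; apply: subset_trans sJK sKI.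
exists I; split => //; split => // K lK sKI nK.
by apply/eqP; move: (H K); rewrite lK sKI nK /= negbK.
Qed.

Lemma min_is_Ssoc J : pminimal J -> J = Ssoc /\ #|Ssoc| = q.
Proof.
case=> lJ nJ minJ.
have genJ u : u \in J -> u != 0 -> gen u = J.
  move=> uJ u0; apply: minJ (gen_li u) (gen_sub lJ uJ) _.
  by apply/eqP => h; have := self_gen u; rewrite h inE (negPf u0).
have JS : J \subset Ssoc.
  apply/subsetP => z zJ; apply/SsocP => m mM.
  case: (eqVneq z 0) => [->|z0]; first by rewrite mulr0.
  case: (eqVneq (m * z) 0) => // mz0; exfalso.
  have [_ _ Hm] := liP lJ.
  have : z \in gen (m * z) by rewrite (genJ _ (Hm m z zJ) mz0).
  case/genP => r zr.
  have : 1 - r * m \in ann z by rewrite inE mulrBl mul1r -mulrA -zr subrr.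
  move/(subsetP (ann_subM z0)) => h.
  have [_ Ma MMul] := liP M_li.
  have : (1 - r * m) + r * m \in M by apply: Ma => //; apply: MMul.
  by rewrite subrK (negPf one_notin_M).
have [y yJ y0] := nonzero_elt lJ nJ.
have cq : (q <= #|J|)%N.
  have h1 := card_gen y; rewrite Hq (genJ y yJ y0) in h1.
  have h2 : (#|J| * #|ann y| <= #|J| * #|M|)%N.
    by rewrite leq_mul2l subset_leq_card ?orbT // ann_subM.
  by have := leq_trans h1 h2; rewrite leq_pmul2r // M0.
have cS := Ssoc_bound.
have eJ : J = Ssoc by apply/eqP; rewrite eqEcard JS /=; exact: leq_trans cS cq.
split => //; apply/eqP; by rewrite eqn_leq cS -eJ cq.
Qed.

Lemma Ssoc_min : pminimal Ssoc /\ #|Ssoc| = q.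
Proof.
have nT : [set: R] != [set 0].
  by apply/eqP=> h; have := in_setT (1:R); rewrite h inE oner_eq0.
have [J [mJ _]] := ex_min setT_li nT; have [eJ cq] := min_is_Ssoc mJ.
by split; [rewrite -eJ | exact: cq].
Qed.

Lemma Ssoc_sub_nz I : left_ideal I -> I != [set 0] -> Ssoc \subset I.
Proof. by move=> lI nI; have [J [mJ sJI]] := ex_min lI nI; have [<- _] := min_is_Ssoc mJ. Qed.

Lemma socle_eq : socle R = Ssoc.
Proof.
have [[lS nS minS] cS] := Ssoc_min.
have minb : minimal_left_ideal Ssoc.
  apply/and3P; split => //; apply/forallP => K; apply/implyP => /andP[lK sK].
  case: (eqVneq K [set 0]) => //= nK; by rewrite (minS K lK sK nK) eqxx.
have fam : left_ideal Ssoc && [forall J, minimal_left_ideal J ==> (J \subset Ssoc)].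
  rewrite lS /=; apply/forallP => J; apply/implyP => /and3P[lJ nJ /forallP mJ].
  have sSJ := Ssoc_sub_nz lJ nJ.
  by move: (mJ Ssoc); rewrite lS sSJ (negPf nS) /= => /eqP <-.
apply/eqP; rewrite eqEsubset; apply/andP; split.
  exact: (bigcap_inf (F := id) _ fam).
apply/bigcapsP => I /andP[lI /forallP h]; by move: (h Ssoc); rewrite minb.
Qed.

Lemma local_facts : [/\ left_ideal (socle R), #|socle R| = q, (1 < q)%N &
  forall x, x != 0 -> socle R \subset gen x].
Proof.
have [[lS nS minS] cS] := Ssoc_min.
rewrite socle_eq; split => //.
  have [y yS y0] := nonzero_elt lS nS.
  have s2 : [set 0; y] \subset Ssoc.
    by apply/subsetP => z /set2P[]->; rewrite ?Ssoc0.
  by have := subset_leq_card s2; rewrite cards2 eq_sym y0 cS.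
move=> x x0; apply: Ssoc_sub_nz; first exact: gen_li.
by apply/eqP => h; have := self_gen x; rewrite h inE (negPf x0).
Qed.

End LocalRing.

Section Prod.
Variables (t : nat) (R_ : 'I_t -> finNzRingType).

Lemma pmulE (r x : prodR R_) i : pmul r x i = r i * x i.
Proof. by rewrite /pmul ffunE. Qed.

Lemma inLP (x y : prodR R_) : reflect (exists r, y = pmul r x) (y \in lideal_gen x).
Proof. by apply: (iffP imsetP) => [[r _ ->]|[r ->]]; exists r. Qed.

Lemma self_L (x : prodR R_) : x \in lideal_gen x.
Proof.
apply/inLP; exists (@finfun _ (fun i => R_ i) (fun i => 1)).
by apply/ffunP => i; rewrite pmulE ffunE mul1r.
Qed.

Lemma nhw_unique (w1 w2 : prodR R_ -> rat) :
  normalized_homogeneous_weight w1 -> normalized_homogeneous_weight w2 ->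
  forall a, w1 a = w2 a.
Proof.
case=> h10 h1c h1s [h20 h2c h2s] a.
have [n] := ubnP #|lideal_gen a|; elim: n a => // n IH a Hn.
case: (eqVneq a (pzero R_)) => [->|a0]; first by rewrite h10 h20.
have sub y : y \in lideal_gen a -> lideal_gen y \subset lideal_gen a.
  case/inLP => r ->; apply/subsetP => z /inLP[s ->]; apply/inLP.
  by exists (pmul s r); apply/ffunP => i; rewrite !pmulE mulrA.
pose E := [set y in lideal_gen a | lideal_gen y == lideal_gen a].
have := h1s a a0; rewrite -(h2s a a0) (big_setID E) /= [in RHS](big_setID E) /=.
have eq2 : \sum_(y in lideal_gen a :\: E) w1 y = \sum_(y in lideal_gen a :\: E) w2 y.
  apply: eq_bigr => y; rewrite !inE => /andP[hE hL]; rewrite hL /= in hE.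
  have hp : (#|lideal_gen y| < #|lideal_gen a|)%N.
    by apply: proper_card; rewrite properEneq hE sub.
  by apply: IH; rewrite ltnS in Hn; apply: leq_trans hp Hn.
have eq1 (w : prodR R_ -> rat) : (forall x y, lideal_gen x = lideal_gen y -> w x = w y) ->
    \sum_(y in lideal_gen a :&: E) w y = w a *+ #|lideal_gen a :&: E|.
  move=> hc; rewrite -sumr_const; apply: eq_bigr => y; rewrite !inE => /andP[_ /andP[_ /eqP]].
  exact: hc.
rewrite eq2 (eq1 _ h1c) (eq1 _ h2c) => /addIr /eqP.
have k0 : (#|lideal_gen a :&: E| != 0)%N.
  by rewrite -lt0n; apply/card_gt0P; exists a; rewrite !inE self_L eqxx.
have kR : (#|lideal_gen a :&: E|%:R : rat) != 0 by rewrite pnatr_eq0.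
by rewrite -[w1 a *+ _]mulr_natr -[w2 a *+ _]mulr_natr (inj_eq (mulIf kR)) => /eqP.
Qed.


Variable q : nat.
Definition cst : rat := - ((q%:R - 1)^-1).
Definition wt (a : prodR R_) : rat := if a \in psocle R_ then 1 - cst ^+ hwt a else 1.
Definition g i (z : R_ i) : rat :=
  if z \in socle (R_ i) then (if z == 0 then 1 else cst) else 0.

Hypothesis Hf : forall i, [/\ left_ideal (socle (R_ i)), #|socle (R_ i)| = q, (1 < q)%N &
  forall x, x != 0 -> socle (R_ i) \subset gen x].

Lemma soc0 i : (0 : R_ i) \in socle (R_ i).
Proof. by have [l _ _ _] := Hf i; case: (liP l). Qed.

Lemma g_sum i (x : R_ i) : x != 0 -> \sum_(z in gen x) g z = 0.
Proof.
move=> x0; have [l cq q1 Hs] := Hf i; have sS := Hs x x0.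
rewrite (bigID (mem (socle (R_ i)))) /= [X in _ + X]big1 ?addr0; last first.
  by move=> z /andP[_ /negPf]; rewrite /g => ->.
rewrite (eq_bigl (mem (socle (R_ i)))); last first.
  by move=> z; rewrite /= andb_idl // => /(subsetP sS).
rewrite (bigD1 0) /=; last exact: soc0.
rewrite (eq_bigr (fun _ => cst)); last first.
  by move=> z /andP[zs z0]; rewrite /g zs (negPf z0).
rewrite (eq_bigl (mem (socle (R_ i) :\ 0))); last by move=> z; rewrite /= !inE andbC.
rewrite sumr_const /g soc0 eqxx.
have e1 : #|socle (R_ i) :\ 0| = (q - 1)%N.
  by have := cardsD1 0 (socle (R_ i)); rewrite cq soc0 /= => ->; rewrite addKn.
rewrite e1 -mulr_natr natrB; last exact: ltnW.
have hq : (q%:R - 1 : rat) != 0.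
  by rewrite subr_eq0 pnatr_eq1; apply/eqP => h; move: q1; rewrite h.
by rewrite /cst mulNr mulVf // ?addrN ?soc0.
Qed.


Lemma w_prod a : wt a = 1 - \prod_i g (a i).
Proof.
rewrite /wt; case: ifP => Ha.
  congr (1 - _); rewrite /hwt -prodr_const big_mkcond /=; apply: eq_bigr => i _.
  move: Ha; rewrite inE => /forallP/(_ i) hi.
  by rewrite inE /g hi; case: eqP.
move/negbT: Ha; rewrite inE negb_forall => /existsP[i hi].
rewrite (bigD1 i) //=.
have -> : g (a i) = 0 by rewrite /g (negPf hi).
by rewrite mul0r subr0.
Qed.

Definition single i0 (s : R_ i0) : prodR R_ :=
  @finfun _ (fun i => R_ i) (dfwith (fun j => (0 : R_ j)) s).

Lemma single_in i0 (s : R_ i0) : single s i0 = s.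
Proof. by rewrite /single ffunE dfwith_in. Qed.

Lemma single_out i0 (s : R_ i0) j : i0 != j -> single s j = 0.
Proof. by move=> h; rewrite /single ffunE dfwith_out. Qed.

Definition padd (y e : prodR R_) : prodR R_ := @finfun _ (fun i => R_ i) (fun i => y i + e i).
Definition psub (y e : prodR R_) : prodR R_ := @finfun _ (fun i => R_ i) (fun i => y i - e i).

Lemma padd_pmul r r' x : padd (pmul r x) (pmul r' x) = pmul (padd r r') x.
Proof. by apply/ffunP => i; rewrite !ffunE mulrDl. Qed.
Lemma psub_pmul r r' x : psub (pmul r x) (pmul r' x) = pmul (psub r r') x.
Proof. by apply/ffunP => i; rewrite !ffunE mulrBl. Qed.

Lemma sum_prod_zero x : x != pzero R_ ->
  \sum_(y in lideal_gen x) \prod_i g (y i) = 0.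
Proof.
move=> x0.
have [i0 xi0] : exists i0, x i0 != 0.
  case: (boolP [exists i, x i != 0]) => [/existsP//|/existsPn H]; exfalso.
  move/eqP: x0; apply; apply/ffunP => i; rewrite /pzero ffunE.
  by move: (H i); rewrite negbK => /eqP.
set L := lideal_gen x.
pose Q (y : prodR R_) := \prod_(i | i != i0) g (y i).
rewrite (eq_bigr (fun y : prodR R_ => g (y i0) * Q y)); last by move=> y _; rewrite (bigD1 i0).
rewrite (partition_big (J := R_ i0) (fun y : prodR R_ => y i0) predT) //=.
pose T z := \sum_(y | (y \in L) && (y i0 == z)) Q y.
have e1 z : \sum_(y | (y \in L) && (y i0 == z)) g (y i0) * Q y = g z * T z.
  by rewrite /T mulr_sumr; apply: eq_bigr => y /andP[_ /eqP->].
have e2 z : T z = if z \in gen (x i0) then T 0 else 0.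
  case: ifP => hz; last first.
    apply: big_pred0 => y; apply/negbTE/negP => /andP[/inLP[r ->] /eqP hz'].
    by move: hz; rewrite -hz' pmulE mem_gen.
  case/genP: hz => s zE.
  pose e := pmul (single s) x.
  have ei0 : e i0 = z by rewrite /e pmulE single_in zE.
  have ej j : i0 != j -> e j = 0 by move=> h; rewrite /e pmulE single_out ?mul0r.
  rewrite /T (reindex (fun y => padd y e)) /=; last first.
    apply: onW_bij; exists (fun y => psub y e) => y; apply/ffunP => i;
      by rewrite !ffunE ?addrK ?subrK.
  apply: eq_big => y.
    rewrite /padd ffunE ei0 -{2}(add0r z) (inj_eq (addIr z)).
    case: (y i0 == 0); rewrite ?andbF ?andbT //.
    apply/idP/idP => /inLP[r hr]; apply/inLP.
      exists (psub r (single s)); rewrite -psub_pmul -hr.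
      by apply/ffunP => i; rewrite !ffunE addrK.
    by exists (padd r (single s)); rewrite -padd_pmul hr.
  move=> _; apply: eq_bigr => j hj; rewrite /padd ffunE ej ?addr0 //.
  by rewrite eq_sym.
rewrite (eq_bigr (fun z => g z * T z)); last by move=> z _; exact: e1.
rewrite (eq_bigr (fun z => g z * (if z \in gen (x i0) then T 0 else 0))); last first.
  by move=> z _; rewrite -e2.
have -> : \sum_z g z * (if z \in gen (x i0) then T 0 else 0) =
   (\sum_(z in gen (x i0)) g z) * T 0.
  rewrite mulr_suml [RHS]big_mkcond /=; apply: eq_bigr => z _.
  by case: ifP; rewrite ?mulr0 ?mul0r.
by rewrite g_sum // mul0r.
Qed.


Lemma w_norm : normalized_homogeneous_weight wt.
Proof.
split.
- rewrite w_prod big1 ?subrr // => i _; by rewrite /pzero ffunE /g soc0 eqxx.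
- move=> x y hxy.
  have mono (a b : prodR R_) r : a = pmul r b ->
      ((b \in psocle R_) -> (a \in psocle R_)) /\ [set i | a i != 0] \subset [set i | b i != 0].
    move=> ->; split.
      rewrite !inE => /forallP h; apply/forallP => i; rewrite pmulE.
      by have [l _ _ _] := Hf i; case: (liP l) => _ _ Hm; apply: Hm.
    by apply/subsetP => i; rewrite !inE pmulE; apply: contra_neq => ->; rewrite mulr0.
  have [r hr] : exists r, x = pmul r y by apply/inLP; rewrite -hxy self_L.
  have [s hs] : exists s, y = pmul s x by apply/inLP; rewrite hxy self_L.
  have [m1 s1] := mono _ _ _ hr; have [m2 s2] := mono _ _ _ hs.
  rewrite /wt /hwt; have -> : (x \in psocle R_) = (y \in psocle R_) by apply/idP/idP.
  have -> : [set i | x i != 0] = [set i | y i != 0] by apply/eqP; rewrite eqEsubset s1 s2.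
  done.
- move=> x x0; rewrite (eq_bigr (fun y : prodR R_ => 1 - \prod_i g (y i))); last by move=> y _; exact: w_prod.
  by rewrite sumrB sum_prod_zero // subr0 sumr_const.
Qed.

End Prod.

Unset Implicit Arguments.

Theorem proposition3p8 (t : nat) (R_ : 'I_t -> finNzRingType) (q : nat)
  (M_ : forall i : 'I_t, {set R_ i})
  (Hloc : forall i, local_with_max (M_ i))
  (Hfrob : forall i, frobenius (R_ i))
  (Hres : forall i, #|[set: R_ i]|%N = (q * #|M_ i|)%N) :
  let w := fun a : prodR R_ =>
    if a \in psocle R_ then 1 - (- ((q%:R - 1)^-1)) ^+ hwt a else (1 : rat) in
  normalized_homogeneous_weight w /\
  (forall w', normalized_homogeneous_weight w' -> forall a, w' a = w a).
Proof.
move=> w.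
have Hf : forall i, [/\ left_ideal (socle (R_ i)), #|socle (R_ i)| = q, (1 < q)%N &
    forall x, x != 0 -> socle (R_ i) \subset gen x].
  by move=> i; have [chi hchi] := Hfrob i; exact: (local_facts (Hloc i) hchi (Hres i)).
change (normalized_homogeneous_weight (@wt t R_ q) /\
  (forall w', normalized_homogeneous_weight w' -> forall a, w' a = @wt t R_ q a)).
split; first exact: w_norm Hf.
by move=> w' hw' a; exact: nhw_unique hw' (w_norm Hf) a.
Qed.
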